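(* Let $\mathcal{X}$ be a finite set of actions, $\mathcal{Y}$ a finite set of responses, $\mathcal{H}\subseteq\mathcal{Y}^{\mathcal{X}}$, $\mathrm{cost}:\mathcal{X}\times\mathcal{Y}\to\mathbb{R}_+$. Let $f:2^{\mathcal{X}\times\mathcal{Y}}\to\mathbb{R}_+$ and $Q>0$; suppose $f$ is submodular, $f(\emptyset)=0$, and $f$ is consistency-aware for $Q$. Then there exists $x\in\mathcal{X}$ such that $$u^f(x,\emptyset)\ge\frac{Q}{2\min(g_{\mathrm{cost}},R_{\mathrm{cost}})\,\mathrm{OPT}}.$$
   Context: The true state is an unknown $h^*\in\mathcal{H}$. An interactive algorithm, given the observed set $S$ of action-response pairs, either selects an action $x$ (observing $(x,h^*(x))$) or terminates; $S^h[\mathcal{A}]$ is the set collected until termination when $h^*=h$; $\mathrm{cost}(\mathcal{A})=\max_{h\in\mathcal{H}}\sum_{(x,y)\in S^h[\mathcal{A}]}\mathrm{cost}(x,y)$; $\mathrm{OPT}$ is the minimum of $\mathrm{cost}(\mathcal{A})$ over interactive algorithms with $f(S^h[\mathcal{A}])\ge Q$ for all $h\in\mathcal{H}$. Version space $V(S)=\{h\in\mathcal{H}\mid\forall(x,y)\in S,\ y=h(x)\}$. $f$ is consistency-aware for $Q$ if $f(S)\ge Q$ whenever $V(S)=\emptyset$. $\delta_g(z\mid A)=g(A\cup\{z\})-g(A)$; $u^f(x,S)=\min_{h\in V(S)}\frac{\delta_{\min(f,Q)}((x,h(x))\mid S)}{\mathrm{cost}(x,h(x))}$. $R_{\mathrm{cost}}=\max_x\frac{\max_y\mathrm{cost}(x,y)}{\min_y\mathrm{cost}(x,y)}$.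 With $\phi(x)$ the second-smallest value of the multiset $\{\mathrm{cost}(x,y)\mid y\in\mathcal{Y}\}$, $\phi_{\min}=\min_x\phi(x)$ and $c_{\max}=\max_{(x,y)}\mathrm{cost}(x,y)$, $g_{\mathrm{cost}}=c_{\max}/\phi_{\min}$. *)

(* Defs.v *)
From HB Require Import structures.
From mathcomp Require Import all_boot all_order all_algebra.
Set Implicit Arguments. Unset Strict Implicit. Unset Printing Implicit Defensive.
Import Order.TTheory GRing.Theory Num.Theory.
Local Open Scope ring_scope.

Section Defs.
Variable R : realFieldType.

(* minimum / maximum of a non-empty finite list of reals (0 on the empty list;
   only ever used on non-empty lists below). *)
Definition minseq (s : seq R) : R :=
  if s is a :: t then foldr Num.min a t else 0.
Definition maxseq (s : seq R) : R :=
  if s is a :: t then foldr Num.max a t else 0.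

Variables (X Y : finType).

Definition vspace (H : {set {ffun X -> Y}}) (S : {set X * Y}) : {set {ffun X -> Y}} :=
  [set h in H | [forall p in S, h p.1 == p.2]].

Definition submodular (f : {set X * Y} -> R) : Prop :=
  forall A B : {set X * Y}, f (A :|: B) + f (A :&: B) <= f A + f B.

Definition consistency_aware (H : {set {ffun X -> Y}}) (f : {set X * Y} -> R) (Q : R) : Prop :=
  forall S : {set X * Y}, vspace H S = set0 -> Q <= f S.

Definition delta (g : {set X * Y} -> R) (z : X * Y) (A : {set X * Y}) : R :=
  g (z |: A) - g A.

Definition ufun (H : {set {ffun X -> Y}}) (cost : X -> Y -> R)
  (f : {set X * Y} -> R) (Q : R) (x : X) (S : {set X * Y}) : R :=
  minseq [seq delta (fun T => Num.min (f T) Q) (x, h x) S / cost x (h x)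
         | h : {ffun X -> Y} <- enum (vspace H S)].

Definition Rcost (cost : X -> Y -> R) : R :=
  maxseq [seq maxseq [seq cost x y | y <- enum Y] / minseq [seq cost x y | y <- enum Y]
         | x <- enum X].

(* phi(x) = second smallest element of the multiset {cost(x,y) | y in Y}. *)
Definition phi (cost : X -> Y -> R) (x : X) : R :=
  nth 0 (sort <=%R [seq cost x y | y <- enum Y]) 1.
Definition phi_min (cost : X -> Y -> R) : R := minseq [seq phi cost x | x <- enum X].
Definition c_max (cost : X -> Y -> R) : R := maxseq [seq cost x y | x <- enum X, y <- enum Y].
Definition gcost (cost : X -> Y -> R) : R := c_max cost / phi_min cost.

(* Interactive (deterministic) algorithms: given the observed set S, either
   select an action (Some x) or terminate (None). *)
Definition algorithm := {set X * Y} -> option X.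

Fixpoint run (A : algorithm) (h : {ffun X -> Y}) (k : nat) : {set X * Y} :=
  if k is k'.+1 then
    let S := run A h k' in
    match A S with Some x => (x, h x) |: S | None => S end
  else set0.

Definition terminates (A : algorithm) (h : {ffun X -> Y}) : Prop :=
  exists k, A (run A h k) = None.

(* S^h[A]: the set collected until termination (a terminating run stops after
   at most #|X| rounds, see [collected_correct] below). *)
Definition collected (A : algorithm) (h : {ffun X -> Y}) : {set X * Y} := run A h #|X|.

Definition alg_cost (H : {set {ffun X -> Y}}) (cost : X -> Y -> R) (A : algorithm) : R :=
  maxseq [seq \sum_(p in collected A h) cost p.1 p.2 | h : {ffun X -> Y} <- enum H].

Definition feasible (H : {set {ffun X -> Y}}) (f : {set X * Y} -> R) (Q : R) (A : algorithm) : Prop :=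
  forall h, h \in H -> terminates A h /\ Q <= f (collected A h).

Definition is_OPT (H : {set {ffun X -> Y}}) (cost : X -> Y -> R)
  (f : {set X * Y} -> R) (Q : R) (OPT : R) : Prop :=
  (exists A, feasible H f Q A /\ alg_cost H cost A = OPT) /\
  (forall A, feasible H f Q A -> OPT <= alg_cost H cost A).

End Defs.

(* Justification of [collected]: any terminating run stops within #|X| rounds,
   so [collected A h] is exactly the set S^h[A] at termination. *)
Section S.
Variables (X Y : finType) (A : algorithm X Y) (h : {ffun X -> Y}).

Lemma run_fix k : A (run A h k) = None -> forall j, (k <= j)%N -> run A h j = run A h k.
Proof.
move=> Hk; elim=> [|j IH]; first by rewrite leqn0 => /eqP ->.
rewrite leq_eqVlt => /orP [/eqP <- //| ltkj].
by rewrite /= IH // Hk.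
Qed.

Lemma run_stuck k x : A (run A h k) = Some x -> (x, h x) \in run A h k ->
  forall j, (k <= j)%N -> run A h j = run A h k.
Proof.
move=> Hk Hin; elim=> [|j IH]; first by rewrite leqn0 => /eqP ->.
rewrite leq_eqVlt => /orP [/eqP <- //| ltkj].
by rewrite /= IH // Hk; apply/setP => z; rewrite in_setU1; case: eqP => // ->.
Qed.

Lemma run_sub k : run A h k \subset [set (x, h x) | x : X].
Proof.
elim: k => [|k IH] /=; first exact: sub0set.
case: (A _) => [x|] //; rewrite subUset IH andbT sub1set.
by apply/imsetP; exists x.
Qed.

Lemma collected_correct k : A (run A h k) = None ->
  collected A h = run A h k /\ A (collected A h) = None.
Proof.
move=> Hk.
have ex : exists k, (fun k => A (run A h k) == None) k by exists k; rewrite Hk.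
case: (ex_minnP ex) => k0 /eqP Hk0 Hmin.
have live : forall i, (i <= k0)%N -> #|run A h i| = i.
  elim=> [_|i IH lt]; first by rewrite /= cards0.
  have lti : (i < k0)%N by [].
  rewrite /=; case E: (A (run A h i)) => [x|]; last first.
    by move: (Hmin i); rewrite E eqxx => /(_ isT); rewrite leqNgt lti.
  case: (boolP ((x, h x) \in run A h i)) => Hin.
    have Heq := run_stuck E Hin (ltnW lti).
    by move: Hk0; rewrite Heq E.
  by rewrite cardsU1 Hin IH // ltnW.
have lek0 : (k0 <= #|X|)%N.
  rewrite -(live k0 (leqnn _)).
  apply: (leq_trans (subset_leq_card (run_sub k0))).
  exact: leq_imset_card.
have -> : collected A h = run A h k0 by exact: run_fix.
split=> //.
by rewrite (run_fix Hk0 (Hmin k (introT eqP Hk))).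
Qed.
End S.

(* Main.v *)
Require Import Defs.
From HB Require Import structures.
From mathcomp Require Import all_boot all_order all_algebra.
From mathcomp Require Import lra.
Import Order.TTheory GRing.Theory Num.Theory.
Local Open Scope ring_scope.

Section Seqs.
Variable R : realFieldType.

Lemma minseq_le (s : seq R) a : a \in s -> minseq s <= a.
Proof.
case: s => [//|b t] /=.
elim: t b a => [|c t IH] b a /=; first by rewrite inE => /eqP ->.
rewrite !inE => /orP [/eqP ->|/orP [/eqP ->|Hat]].
- by rewrite ge_min; apply/orP; right; apply: IH; exact: mem_head.
- by rewrite ge_min lexx.
- by rewrite ge_min; apply/orP; right; apply: IH; rewrite inE Hat orbT.
Qed.

Lemma minseq_mem (s : seq R) : s != [::] -> minseq s \in s.
Proof.
case: s => [//|b t] _ /=.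
elim: t b => [|c t IH] b /=; first by rewrite inE.
rewrite minEle; case: ifP => _; first by rewrite !inE eqxx orbT.
by move: (IH b); rewrite !inE => /orP [->|->]; rewrite ?orbT.
Qed.

Lemma le_maxseq (s : seq R) a : a \in s -> a <= maxseq s.
Proof.
case: s => [//|b t] /=.
elim: t b a => [|c t IH] b a /=; first by rewrite inE => /eqP ->.
rewrite !inE => /orP [/eqP ->|/orP [/eqP ->|Hat]].
- by rewrite le_max; apply/orP; right; apply: IH; exact: mem_head.
- by rewrite le_max lexx.
- by rewrite le_max; apply/orP; right; apply: IH; rewrite inE Hat orbT.
Qed.

Lemma maxseq_mem (s : seq R) : s != [::] -> maxseq s \in s.
Proof.
case: s => [//|b t] _ /=.
elim: t b => [|c t IH] b /=; first by rewrite inE.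
rewrite maxEle; case: ifP => _; last by rewrite !inE eqxx orbT.
by move: (IH b); rewrite !inE => /orP [->|->]; rewrite ?orbT.
Qed.

Lemma sum_mono (T : finType) (A B : {set T}) (F : T -> R) :
  (forall i, 0 <= F i) -> A \subset B -> \sum_(i in A) F i <= \sum_(i in B) F i.
Proof. move=> H AB. rewrite [X in _ <= X](big_setID A) /= (setIidPr AB). by rewrite lerDl sumr_ge0. Qed.

End Seqs.


Section Phi.
Variables (R : realFieldType) (X Y : finType) (cost : X -> Y -> R).

Lemma phi_mem x : (1 < #|Y|)%N -> exists y, phi cost x = cost x y.
Proof.
move=> hY.
have: phi cost x \in [seq cost x y | y <- enum Y].
  rewrite /phi -(mem_sort <=%R); apply: mem_nth.
  by rewrite size_sort size_map -cardE.
by case/mapP => y _ ->; exists y.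
Qed.

Lemma phi_le x a b : a != b -> phi cost x <= Num.max (cost x a) (cost x b).
Proof.
move=> ab; set m := Num.max _ _.
rewrite leNgt; apply/negP => hlt.
set l := [seq cost x y | y <- enum Y].
have c2 : (2 <= count (fun c : R => (c <= m)%R) l)%N.
  rewrite /l count_map.
  have -> : count (preim (cost x) (fun c : R => (c <= m)%R)) (enum Y)
      = #|[pred y | cost x y <= m]|.
    by rewrite enumT cardE /enum_mem size_filter; apply: eq_count => y; rewrite !inE.
  apply: (@leq_trans #|[set a; b]|); first by rewrite cards2 ab.
  apply: subset_leq_card; apply/subsetP => y; rewrite !inE => /orP [] /eqP ->.
    by rewrite le_max lexx.
  by rewrite le_max lexx orbT.
have pe := perm_sort <=%R l.
have : count (fun c : R => (c <= m)%R) (sort <=%R l) = count (fun c : R => (c <= m)%R) l.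
  by apply/permP; rewrite pe.
have so : sorted <=%R (sort <=%R l) by apply: sort_sorted; exact: le_total.
move: hlt so; rewrite /phi -/l.
case: (sort <=%R l) => [|c0 [|c1 t]] //=.
- by move=> _ _ e; move: c2; rewrite -e.
- by move=> _ _ e; move: c2; rewrite -e; case: (c0 <= m).
move=> hlt /andP [_ p1] e.
have al := order_path_min le_trans p1.
have : count (fun c : R => (c <= m)%R) t = 0%N.
  apply/eqP; rewrite -leqn0 leqNgt -has_count; apply/hasPn => c ct.
  by rewrite -ltNge; apply: (lt_le_trans hlt); move/allP: al; apply.
move=> ct0; move: c2; rewrite -e /= (leNgt c1) hlt /= ct0.
by case: (c0 <= m)%R.
Qed.
End Phi.


Section Run.
Variables (X Y : finType) (A : algorithm X Y).

Lemma run_elem g k p : p \in run A g k -> g p.1 = p.2.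
Proof.
move=> pin; have /subsetP /(_ p pin) /imsetP [x _ ->] := run_sub A g k. by [].
Qed.

Lemma run_step g k : run A g k \subset run A g k.+1.
Proof. by rewrite /=; case: (A _) => [x|] //; exact: subsetU1. Qed.

Lemma run_mono g i j : (i <= j)%N -> run A g i \subset run A g j.
Proof.
elim: j => [|j IH]; first by rewrite leqn0 => /eqP ->.
rewrite leq_eqVlt => /orP [/eqP -> //| lt].
exact: subset_trans (IH lt) (run_step g j).
Qed.

Lemma run_agree (g h : {ffun X -> Y}) k : (forall p, p \in run A g k -> h p.1 = p.2) ->
  forall i, (i <= k)%N -> run A h i = run A g i.
Proof.
move=> cons; elim=> [//|i IH] lt.
rewrite /= IH ?(ltnW lt) //.
case E: (A (run A g i)) => [x|] //.
have : (x, g x) \in run A g k.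
  move/subsetP: (@run_mono g i.+1 k lt); apply; by rewrite /= E setU11.
by move/cons => /= ->.
Qed.
End Run.


Section Sub.
Variable R : realFieldType.

Lemma subadd (T : finType) (F : {set T} -> R) : F set0 = 0 ->
  (forall z S, F (z |: S) <= F [set z] + F S) ->
  forall S, F S <= \sum_(p in S) F [set p].
Proof.
move=> F0 Fs S; move: {2}#|S| (erefl #|S|) => n; elim: n S => [|n IH] S cS.
  by rewrite (cards0_eq cS) big_set0 F0.
have : (0 < #|S|)%N by rewrite cS.
rewrite card_gt0 => /set0Pn [z zS].
rewrite (big_setD1 _ zS) /= -{1}(setD1K zS).
apply: (le_trans (Fs _ _)); rewrite lerD2l; apply: IH.
by move: cS; rewrite -{1}(setD1K zS) cardsU1 !inE eqxx /= => -[].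
Qed.

Lemma minQ_sub (T : finType) (f : {set T} -> R) (Q : R) :
  (forall S, 0 <= f S) -> 0 < Q ->
  (forall A B : {set T}, f (A :|: B) + f (A :&: B) <= f A + f B) ->
  forall z S, Num.min (f (z |: S)) Q <= Num.min (f [set z]) Q + Num.min (f S) Q.
Proof.
move=> f0 Q0 sm z S.
have h1 := sm [set z] S. have h2 := f0 ([set z] :&: S).
have h3 := f0 [set z]; have h4 := f0 S.
rewrite !minEle.
case: ifP => a1; case: ifP => a2; case: ifP => a3; move: a1 a2 a3; rewrite ?leNgt;
  try (move/negbFE); try (move/negbFE); lra.
Qed.

Lemma sum_mono' (T : finType) (A B : {set T}) (F : T -> R) :
  (forall i, 0 <= F i) -> A \subset B -> \sum_(i in A) F i <= \sum_(i in B) F i.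
Proof. exact: sum_mono. Qed.

Lemma sumU1 (T : finType) (z : T) (S : {set T}) (F : T -> R) :
  (forall i, 0 <= F i) -> \sum_(i in z |: S) F i <= F z + \sum_(i in S) F i.
Proof.
move=> Fp; case: (boolP (z \in S)) => zS.
  by rewrite (setUidPr _) ?sub1set // lerDr.
by rewrite big_setU1.
Qed.
End Sub.


Lemma vspace0 (X Y : finType) (H : {set {ffun X -> Y}}) : vspace H set0 = H.
Proof.
apply/setP => h; rewrite inE; apply/andb_idr => _.
by apply/forall_inP => p; rewrite inE.
Qed.

Lemma vspaceP (X Y : finType) (H : {set {ffun X -> Y}}) (S : {set X * Y}) h :
  reflect (h \in H /\ forall p, p \in S -> h p.1 = p.2) (h \in vspace H S).
Proof.
rewrite inE; apply: (iffP andP) => [[hH /forall_inP c]|[hH c]]; split => //.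
  by move=> p /c /eqP.
by apply/forall_inP => p /c ->.
Qed.

Lemma ratio_ge1 (R : realFieldType) (a b : R) : 0 < b -> b <= a -> 1 <= a / b.
Proof. by move=> b0 ba; rewrite ler_pdivlMr // mul1r. Qed.

Theorem lemma6 (R : realFieldType) (X Y : finType) (H : {set {ffun X -> Y}})
  (cost : X -> Y -> R) (f : {set X * Y} -> R) (Q OPT : R) :
  (forall x y, 0 < cost x y) ->
  (1 < #|Y|)%N ->
  H != set0 ->
  (forall S, 0 <= f S) ->
  0 < Q ->
  submodular f ->
  f set0 = 0 ->
  consistency_aware H f Q ->
  is_OPT H cost f Q OPT ->
  exists x : X,
    Q / (2 * Num.min (gcost cost) (Rcost cost) * OPT) <= ufun H cost f Q x set0.
Proof.
move=> cpos hY Hne fge0 Qpos sm f0 ca [[A0 [feasA0 costA0]] _].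
set n := #|X|.
pose C (S : {set X * Y}) := \sum_(p in S) cost p.1 p.2.
have cge0 : forall p : X * Y, 0 <= cost p.1 p.2 by move=> p; exact: ltW.
have Cmono : forall S T : {set X * Y}, S \subset T -> C S <= C T by move=> S T ST; apply: sum_mono.
have Cge0 : forall S, 0 <= C S by move=> S; exact: sumr_ge0.
have Cel : forall (S : {set X * Y}) p, p \in S -> cost p.1 p.2 <= C S.
  move=> S p pS; have := Cmono [set p] S; rewrite sub1set pS /C big_set1; exact.
have optC : forall h, h \in H -> C (run A0 h n) <= OPT.
  move=> h hH; rewrite -costA0 /alg_cost; apply: le_maxseq.
  by apply/mapP; exists h; rewrite ?mem_enum.
have fQ : forall h, h \in H -> Q <= f (run A0 h n) by move=> h /feasA0 [].
have neset : forall S, Q <= f S -> S != set0.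
  by move=> S; apply: contraTneq => ->; rewrite f0 -ltNge.
case/set0Pn: (Hne) => h0 h0H.
have [p0 p0in] : exists p, p \in run A0 h0 n by apply/set0Pn; apply: neset; exact: fQ.
have OPTpos : 0 < OPT.
  apply: (lt_le_trans (cpos p0.1 p0.2)); apply: le_trans (optC _ h0H); exact: Cel.
set x0 := p0.1.
pose F T := Num.min (f T) Q.
pose u x := ufun H cost f Q x set0.
pose d x (h : {ffun X -> Y}) := delta F (x, h x) set0 / cost x (h x).
have ex_h : forall x, exists h, h \in H /\ d x h <= u x.
  move=> x.
  have : u x \in [seq d x h | h : {ffun X -> Y} <- enum (vspace H set0)].
    apply: minseq_mem; rewrite vspace0.
    case E: (enum H) => [|a s] //.
    by move: (mem_enum (mem H) h0); rewrite E h0H.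
  case/mapP => h; rewrite vspace0 mem_enum => hH ->; by exists h.
pose hx x := odflt h0 [pick h in H | d x h <= u x].
have hxP : forall x, hx x \in H /\ d x (hx x) <= u x.
  move=> x; rewrite /hx; case: pickP => [h /andP [] //|none] /=.
  by case: (ex_h x) => h [hH hd]; move: (none h); rewrite hH hd.
pose g := [ffun x => hx x x].
pose S i := run A0 g i.

have gE : forall x, g x = hx x x by move=> x; rewrite ffunE.
have L : forall k h x, (k < n)%N -> h \in H -> (forall p, p \in S k -> h p.1 = p.2) ->
    A0 (S k) = Some x -> cost x (h x) <= OPT /\ C (S k) <= OPT.
  move=> k h x kn hH cons E.
  have e : run A0 h k = S k by exact: (@run_agree X Y A0 g h k cons k (leqnn k)).
  have sub : run A0 h k.+1 \subset run A0 h n by exact: (@run_mono X Y A0 h k.+1 n kn).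
  have xin : (x, h x) \in run A0 h n.
    by apply: (subsetP sub); rewrite /= e E setU11.
  split.
    apply: le_trans (optC _ hH); exact: (Cel _ (x, h x)).
  rewrite -e; apply: le_trans (optC _ hH); apply: Cmono; exact: (@run_mono X Y A0 h k n (ltnW kn)).
have Yne : enum Y != [::].
  by apply/eqP => E; move: hY; rewrite cardE E.
have minx_mem : forall x, exists y, minseq [seq cost x y | y <- enum Y] = cost x y.
  move=> x; have : minseq [seq cost x y | y <- enum Y] \in [seq cost x y | y <- enum Y].
    by apply: minseq_mem; rewrite -size_eq0 size_map size_eq0.
  by case/mapP => y _ ->; exists y.
have minx_pos : forall x, 0 < minseq [seq cost x y | y <- enum Y].
  by move=> x; case: (minx_mem x) => y ->.
have Rge1 : 1 <= Rcost cost.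
  apply: (@le_trans _ _ (maxseq [seq cost x0 y | y <- enum Y] / minseq [seq cost x0 y | y <- enum Y])).
    apply: ratio_ge1 => //; case: (minx_mem x0) => y ->; apply: le_maxseq.
    by apply: map_f; rewrite mem_enum.
  by apply: le_maxseq; apply: (map_f (fun x => _ / _)); rewrite mem_enum.
have phimin_mem : exists x, phi_min cost = phi cost x.
  have : phi_min cost \in [seq phi cost x | x <- enum X].
    apply: minseq_mem; have : x0 \in enum X by rewrite mem_enum.
    by case: (enum X).
  by case/mapP => x _ ->; exists x.
have phimin_pos : 0 < phi_min cost.
  by case: phimin_mem => x ->; case: (@phi_mem R X Y cost x hY) => y ->.
have cmax_ge : forall x y, cost x y <= c_max cost.
  move=> x y; apply: le_maxseq; apply: (allpairs_f (fun x y => cost x y)); by rewrite mem_enum.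
have Gge1 : 1 <= gcost cost.
  apply: ratio_ge1 => //; case: phimin_mem => x ->; case: (@phi_mem R X Y cost x hY) => y ->.
  exact: cmax_ge.
set M := Num.min (gcost cost) (Rcost cost).
have Mge1 : 1 <= M by rewrite le_min Gge1 Rge1.
have OPTle : OPT <= 2 * M * OPT by nra.
have Tex : exists T : {set X * Y},
    [/\ Q <= f T, C T <= 2 * M * OPT & forall p, p \in T -> g p.1 = p.2].
  case: (boolP [exists m : 'I_n.+1, vspace H (S m) == set0]) => [/existsP [m0 /eqP m0e] | /existsPn none].
  2: {
    have := none ord_max; rewrite /= => /set0Pn [h /vspaceP [hH cons]].
    have e : run A0 h n = S n by exact: (@run_agree X Y A0 g h n cons n (leqnn n)).
    exists (S n); split.
    - rewrite -e; exact: fQ.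
    - rewrite -e; exact: le_trans (optC _ hH) OPTle.
    - move=> p; exact: run_elem. }
  have exP : exists m, (m <= n)%N && (vspace H (S m) == set0).
    by exists m0; rewrite -ltnS ltn_ord m0e eqxx.
  case: (ex_minnP exP) => m /andP [mn /eqP mE] mmin.
  case: m mn mE mmin => [|k] mn mE mmin.
    by move: mE; rewrite /S /= vspace0 => E; move: Hne; rewrite E eqxx.
  have kne : vspace H (S k) != set0.
    apply/negP => /eqP ke; have := mmin k; rewrite (ltnW mn) ke eqxx /= => /(_ isT).
    by rewrite ltnn.
  case/set0Pn: kne => h /vspaceP [hH cons].
  case E: (A0 (run A0 g k)) => [x|]; last first.
    have e : S k.+1 = S k by rewrite /S /= E.
    have : h \in vspace H (S k) by apply/vspaceP.
    by rewrite -e mE inE.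
  have SkE : S k.+1 = (x, g x) |: S k by rewrite /S /= E.
  have kn : (k < n)%N := mn.
  have [hxO CkO] := L k h x kn hH cons E.
  have cgx : cost x (g x) <= M * OPT.
    rewrite /M minEle; case: ifP => _.
    -
      have phiO : phi_min cost <= OPT.
        have exP2 : exists j, (j <= n)%N && (vspace H (S j) != H).
          by exists k.+1; rewrite mn mE eq_sym Hne.
        case: (ex_minnP exP2) => j /andP [jn jne] jmin.
        case: j jn jne jmin => [|j'] jn jne jmin.
          by move: jne; rewrite /S /= vspace0 eqxx.
        have vj' : vspace H (S j') = H.
          apply/eqP; apply/negPn/negP => ne; have := jmin j'; rewrite (ltnW jn) ne => /(_ isT).
          by rewrite ltnn.
        case E2: (A0 (run A0 g j')) => [x'|]; last first.
          by move: jne; rewrite /S /= E2 -/(S j') vj' eqxx.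
        have : ~~ (H \subset vspace H (S j'.+1)).
          apply: contra jne => sb; rewrite eqEsubset sb andbT.
          by apply/subsetP => h' /vspaceP [].
        case/subsetPn => h1 h1H h1n.
        have : h1 \in vspace H (S j') by rewrite vj'.
        case/vspaceP => _ cons1.
        have neq : h1 x' != g x'.
          apply/eqP => eq; move/negP: h1n; apply; apply/vspaceP; split => // p.
          rewrite /S /= E2 in_setU1 => /orP [/eqP -> /=|pin]; first by rewrite eq.
          exact: cons1.
        have h2H := (hxP x').1.
        have : hx x' \in vspace H (S j') by rewrite vj'.
        case/vspaceP => _ cons2.
        have jn' : (j' < n)%N := jn.
        have [c1 _] := L j' h1 x' jn' h1H cons1 E2.
        have [c2 _] := L j' (hx x') x' jn' h2H cons2 E2.
        rewrite -gE in c2.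
        apply: (@le_trans _ _ (phi cost x')).
          by apply: minseq_le; apply: map_f; rewrite mem_enum.
        apply: le_trans (@phi_le R X Y cost x' (h1 x') (g x') neq) _.
        by rewrite ge_max c1 c2.
      have gE2 : gcost cost * phi_min cost = c_max cost.
        by rewrite /gcost divfK // gt_eqF.
      have g0 : 0 <= gcost cost by apply: le_trans Gge1; exact: ler01.
      apply: le_trans (cmax_ge x (g x)) _; rewrite -gE2.
      exact: ler_wpM2l.
    -
      set mx := maxseq [seq cost x y | y <- enum Y].
      set mn' := minseq [seq cost x y | y <- enum Y].
      have a1 : cost x (g x) <= mx by apply: le_maxseq; apply: map_f; rewrite mem_enum.
      have a2 : mn' <= cost x (h x) by apply: minseq_le; apply: map_f; rewrite mem_enum.
      have a3 : mx / mn' <= Rcost cost.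
        by apply: le_maxseq; apply: (map_f (fun x => _ / _)); rewrite mem_enum.
      have a4 : mx = mx / mn' * mn' by rewrite divfK // gt_eqF // minx_pos.
      have mnp : 0 < mn' := minx_pos x.
      have r0 : 0 <= mx / mn'.
        apply: divr_ge0; last exact: ltW.
        by apply: le_trans a1; exact: ltW.
      set r := mx / mn'; move: a4; rewrite -/r => a4.
      have b1 : r * mn' <= r * OPT by apply: ler_wpM2l => //; exact: le_trans a2 hxO.
      have b2 : r * OPT <= Rcost cost * OPT by apply: ler_wpM2r => //; exact: ltW.
      lra.
  exists (S k.+1); split.
  - by apply: ca; exact: mE.
  - rewrite SkE.
    have su := @sumU1 R _ (x, g x) (S k) (fun p : X * Y => cost p.1 p.2) cge0.
    have oM : OPT <= M * OPT by nra.
    move: CkO; rewrite /C /= in su * => CkO.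
    lra.
  - move=> p; exact: run_elem.
case: Tex => T [QT CT Tg].
set c := Q / (2 * M * OPT).
case: (boolP [exists x, c <= u x]) => [/existsP [x hxx] | /existsPn allx]; first by exists x.
exfalso.
case/set0Pn: (neset T QT) => z zT.
have F0 : F set0 = 0 by rewrite /F f0 minEle ltW.
have FT : Q <= F T by rewrite /F le_min QT lexx.
have Fsub := @subadd R _ F F0 (@minQ_sub R _ f Q fge0 Qpos sm) T.
have term : forall p, p \in T -> F [set p] <= u p.1 * cost p.1 p.2.
  move=> p pT; have gp := Tg p pT; have [_ dle] := hxP p.1.
  have e1 : F [set p] = d p.1 (hx p.1) * cost p.1 p.2.
    by rewrite /d /delta -gE gp -surjective_pairing setU0 F0 subr0 divfK // gt_eqF.
  by rewrite e1; apply: ler_wpM2r => //; exact: ltW.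
have s1 : \sum_(p in T) F [set p] <= \sum_(p in T) u p.1 * cost p.1 p.2.
  by apply: ler_sum => p; exact: term.
have s2 : \sum_(p in T) u p.1 * cost p.1 p.2 < \sum_(p in T) c * cost p.1 p.2.
  apply: ltr_sum; first by apply/hasP; exists z; rewrite ?mem_index_enum.
  by move=> p _; rewrite ltr_pM2r // ltNge allx.
have s3 : \sum_(p in T) c * cost p.1 p.2 = c * C T by rewrite /C mulr_sumr.
have c0 : 0 <= c by apply: divr_ge0; [exact: ltW | nra].
have s4 : c * C T <= c * (2 * M * OPT) by apply: ler_wpM2l.
have s5 : c * (2 * M * OPT) = Q by rewrite /c divfK // gt_eqF //; nra.
have := le_lt_trans (le_trans FT (le_trans Fsub s1)) s2; rewrite s3 => hh.
by have := lt_le_trans hh s4; rewrite s5 ltxx.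
Qed.
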